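(* Let $c$ be the ellipse $x^2/a_c^2+y^2/b_c^2=1$, $a_c>b_c>0$, with numerical eccentricity $m=\sqrt{a_c^2-b_c^2}/a_c$, and let $\mathrm{sn},\mathrm{cn},\mathrm{dn}$ be the Jacobian elliptic functions and $K$ the complete elliptic integral of the first kind with modulus $m$. Then the mapping \[\mathbf Y:\ U\times V\to\mathbb R^2,\quad (\tilde u,\tilde v)\mapsto\left(-a_c\frac{\mathrm{sn}\,\tilde u\ \mathrm{dn}\,\tilde v}{\mathrm{cn}\,\tilde v},\ b_c\frac{\mathrm{cn}\,\tilde u}{\mathrm{cn}\,\tilde v}\right),\quad U=\{\tilde u: 0\le\tilde u<4K\},\ V=\{\tilde v: 0\le\tilde v<K\},\] is injective and parametrizes the exterior of $c$ in such a way that the curves $\tilde u=\text{const}$ are branches of hyperbolas confocal with $c$, the curves $\tilde v=\text{const}$ are ellipses confocal with $c$, and the curves $\tilde u\pm\tilde v=\text{const}$ are tangent lines of $c$.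
   Context: Confocal conics of $c$: $\frac{x^2}{a_c^2+k}+\frac{y^2}{b_c^2+k}=1$, $k\in\mathbb R\setminus\{-a_c^2,-b_c^2\}$. Modulus convention: $\mathrm{sn}\,\tilde u=\sin\varphi$, $\mathrm{cn}\,\tilde u=\cos\varphi$ where $\tilde u=\int_0^\varphi(1-m^2\sin^2\psi)^{-1/2}d\psi$, $\mathrm{dn}=\sqrt{1-m^2\mathrm{sn}^2}$, $K=\int_0^{\pi/2}(1-m^2\sin^2\psi)^{-1/2}d\psi$. *)

(* Defs.v *)
From Stdlib Require Import Reals ClassicalEpsilon.
From Coquelicot Require Import Coquelicot.
Open Scope R_scope.

Definition ell_F (m phi : R) : R :=
  RInt (fun psi => / sqrt (1 - m ^ 2 * (sin psi) ^ 2)) 0 phi.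

(* Jacobi amplitude: the (unique, for 0 <= m < 1) phi with F(m, phi) = u. *)
Definition am (m u : R) : R :=
  epsilon (inhabits 0) (fun phi => ell_F m phi = u).

Definition sn (m u : R) : R := sin (am m u).
Definition cn (m u : R) : R := cos (am m u).
Definition dn (m u : R) : R := sqrt (1 - m ^ 2 * (sn m u) ^ 2).

Definition ellK (m : R) : R := ell_F m (PI / 2).

Definition Ymap (a b m u v : R) : R * R :=
  (- a * (sn m u * dn m v / cn m v), b * (cn m u / cn m v)).

Definition on_confocal (a b k : R) (p : R * R) : Prop :=
  fst p ^ 2 / (a ^ 2 + k) + snd p ^ 2 / (b ^ 2 + k) = 1.

Definition on_tangent (a b x0 y0 : R) (p : R * R) : Prop :=
  fst p * x0 / a ^ 2 + snd p * y0 / b ^ 2 = 1.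

(* Main.v *)
Require Import Defs.
From Stdlib Require Import Reals Lra Psatz Lia ClassicalEpsilon.
From Coquelicot Require Import Coquelicot.
Open Scope R_scope.

Definition fi (m x : R) : R := / sqrt (1 - m ^ 2 * (sin x) ^ 2).

Lemma rad_pos m x : m ^ 2 < 1 -> 0 < 1 - m ^ 2 * (sin x) ^ 2.
Proof.
  intros Hm. pose proof (SIN_bound x) as Hs.
  assert (sin x ^ 2 <= 1) by nra.
  assert (0 <= m ^ 2) by nra. nra.
Qed.

Lemma rad_le1 m x : 1 - m ^ 2 * (sin x) ^ 2 <= 1.
Proof. assert (0 <= m ^ 2 * sin x ^ 2) by (apply Rmult_le_pos; nra). lra. Qed.

Lemma fi_ge1 m x : m ^ 2 < 1 -> 1 <= fi m x.
Proof.
  intros Hm. unfold fi. pose proof (rad_pos m x Hm). pose proof (rad_le1 m x).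
  assert (0 < sqrt (1 - m ^ 2 * sin x ^ 2)) by (apply sqrt_lt_R0; lra).
  assert (sqrt (1 - m ^ 2 * sin x ^ 2) <= 1).
  { apply Rle_trans with (sqrt 1). apply sqrt_le_1_alt; lra. rewrite sqrt_1; lra. }
  assert (/1 <= / sqrt (1 - m ^ 2 * sin x ^ 2)) by (apply Rinv_le_contravar; lra).
  rewrite Rinv_1 in H3; exact H3.
Qed.

Lemma fi_der m x : m ^ 2 < 1 ->
  ex_derive (fi m) x.
Proof.
  intros Hm. unfold fi. pose proof (rad_pos m x Hm).
  auto_derive. split. lra. split; auto.
  apply Rgt_not_eq. apply sqrt_lt_R0. lra.
Qed.

Lemma fi_cont m x : m ^ 2 < 1 -> continuous (fi m) x.
Proof. intros; apply (ex_derive_continuous (fi m) x), fi_der; auto. Qed.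

Lemma fi_ex m a b : m ^ 2 < 1 -> ex_RInt (fi m) a b.
Proof. intros; apply (ex_RInt_continuous (V:=R_CompleteNormedModule)); intros; apply fi_cont; auto. Qed.

Lemma F_eq m x : ell_F m x = RInt (fi m) 0 x.
Proof. reflexivity. Qed.

Lemma F_der m x : m ^ 2 < 1 -> is_derive (ell_F m) x (fi m x).
Proof.
  intros Hm. apply (is_derive_RInt (fi m) (ell_F m) 0 x).
  - apply filter_forall. intros y. rewrite F_eq. apply (RInt_correct (V:=R_CompleteNormedModule)). apply fi_ex; auto.
  - apply fi_cont; auto.
Qed.

Lemma F_diff m x y : m ^ 2 < 1 -> ell_F m y - ell_F m x = RInt (fi m) x y.
Proof.
  intros Hm. rewrite !F_eq. rewrite <- (RInt_Chasles (fi m) 0 x y) by (apply fi_ex; auto).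
  unfold plus; simpl. ring.
Qed.

Lemma F_0 m : ell_F m 0 = 0.
Proof. rewrite F_eq, RInt_point. reflexivity. Qed.

Lemma F_mono m x y : m ^ 2 < 1 -> x <= y -> y - x <= ell_F m y - ell_F m x.
Proof.
  intros Hm Hxy. rewrite F_diff by auto.
  assert (H := RInt_le (fun _ => 1) (fi m) x y Hxy).
  rewrite RInt_const in H. unfold scal in H; simpl in H; unfold mult in H; simpl in H.
  rewrite Rmult_1_r in H. apply H.
  - apply ex_RInt_const.
  - apply fi_ex; auto.
  - intros; apply fi_ge1; auto.
Qed.

Lemma F_lt m x y : m ^ 2 < 1 -> x < y -> ell_F m x < ell_F m y.
Proof. intros Hm H. pose proof (F_mono m x y Hm). lra. Qed.

Lemma F_le m x y : m ^ 2 < 1 -> x <= y -> ell_F m x <= ell_F m y.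
Proof. intros Hm H. pose proof (F_mono m x y Hm). lra. Qed.

Lemma F_inj m x y : m ^ 2 < 1 -> ell_F m x = ell_F m y -> x = y.
Proof.
  intros Hm H. destruct (Rtotal_order x y) as [h|[h|h]]; auto.
  - apply (F_lt m) in h; auto; lra.
  - apply (F_lt m) in h; auto; lra.
Qed.

Lemma F_lt_iff m x y : m ^ 2 < 1 -> (ell_F m x < ell_F m y <-> x < y).
Proof.
  intros Hm; split; intros H.
  - destruct (Rlt_le_dec x y); auto. apply (F_le m) in r; auto; lra.
  - apply F_lt; auto.
Qed.

Lemma F_le_iff m x y : m ^ 2 < 1 -> (ell_F m x <= ell_F m y <-> x <= y).
Proof.
  intros Hm; split; intros H.
  - destruct (Rle_lt_dec x y); auto. apply (F_lt m) in r; auto; lra.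
  - apply F_le; auto.
Qed.

Lemma F_contin m : m ^ 2 < 1 -> continuity (ell_F m).
Proof.
  intros Hm x. apply continuity_pt_filterlim. apply (ex_derive_continuous (ell_F m) x).
  eexists; apply F_der; auto.
Qed.

Lemma F_surj m u : m ^ 2 < 1 -> exists phi, ell_F m phi = u.
Proof.
  intros Hm.
  assert (H1 : ell_F m (- Rabs u) <= u).
  { pose proof (F_mono m (- Rabs u) 0 Hm). rewrite F_0 in H.
    pose proof (Rabs_pos u) as A1. pose proof (Rle_abs (-u)) as A2. rewrite Rabs_Ropp in A2.
    assert (A3 : - Rabs u <= 0) by lra. specialize (H A3). lra. }
  assert (H2 : u <= ell_F m (Rabs u)).
  { pose proof (F_mono m 0 (Rabs u) Hm). rewrite F_0 in H.
    pose proof (Rabs_pos u) as A1. pose proof (Rle_abs u) as A2. specialize (H A1). lra. }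
  destruct (IVT_gen (ell_F m) (- Rabs u) (Rabs u) u (F_contin m Hm)) as [x [_ Hx]].
  - split. apply Rle_trans with (ell_F m (- Rabs u)); auto. apply Rmin_l.
    apply Rle_trans with (ell_F m (Rabs u)); auto. apply Rmax_r.
  - exists x; auto.
Qed.

Lemma am_spec m u : m ^ 2 < 1 -> ell_F m (am m u) = u.
Proof.
  intros Hm. unfold am. apply (epsilon_spec (inhabits 0) (fun phi => ell_F m phi = u)).
  apply F_surj; auto.
Qed.

Lemma am_F m x : m ^ 2 < 1 -> am m (ell_F m x) = x.
Proof. intros Hm. apply (F_inj m); auto. apply am_spec; auto. Qed.

Lemma am_lip m x y : m ^ 2 < 1 -> Rabs (am m x - am m y) <= Rabs (x - y).
Proof.
  intros Hm. rewrite <- (am_spec m x Hm) at 2. rewrite <- (am_spec m y Hm) at 2.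
  set (p := am m x). set (q := am m y).
  destruct (Rle_dec p q).
  - pose proof (F_mono m p q Hm r).
    rewrite Rabs_left1 by lra. rewrite Rabs_left1 by lra. lra.
  - pose proof (F_mono m q p Hm ltac:(lra)).
    rewrite Rabs_right by lra. rewrite Rabs_right by lra. lra.
Qed.

Lemma dn_eq m u : m ^ 2 < 1 -> / fi m (am m u) = dn m u.
Proof.
  intros Hm. unfold fi, dn, sn. rewrite Rinv_inv. reflexivity.
Qed.

Lemma am_der m u : m ^ 2 < 1 -> is_derive (am m) u (dn m u).
Proof.
  intros Hm. rewrite <- dn_eq by auto. apply is_derive_Reals.
  set (p0 := am m u).
  assert (HF := proj1 (is_derive_Reals _ _ _) (F_der m p0 Hm)).
  set (L := fi m p0) in *.
  assert (HL : 1 <= L) by (apply fi_ge1; auto).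
  intros eps Heps. destruct (HF eps Heps) as [del Hdel].
  exists del. intros h hnz hlt.
  set (d := am m (u + h) - p0).
  assert (Hd1 : ell_F m (p0 + d) = u + h).
  { unfold d. replace (p0 + (am m (u + h) - p0)) with (am m (u + h)) by ring. apply am_spec; auto. }
  assert (Hd0 : ell_F m p0 = u) by (apply am_spec; auto).
  assert (dnz : d <> 0).
  { intros E. rewrite E, Rplus_0_r, Hd0 in Hd1. lra. }
  assert (dlt : Rabs d < del).
  { apply Rle_lt_trans with (Rabs h); auto. unfold d, p0.
    replace h with ((u + h) - u) at 2 by ring. apply am_lip; auto. }
  specialize (Hdel d dnz dlt). rewrite Hd1, Hd0 in Hdel.
  replace (u + h - u) with h in Hdel by ring.
  set (q := h / d) in *.
  assert (Hq : 1 <= q).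
  { unfold q. destruct (Rle_lt_dec 0 d).
    - assert (0 < d) by (destruct r; auto; congruence).
      pose proof (F_mono m p0 (p0 + d) Hm ltac:(lra)). rewrite Hd1, Hd0 in H0.
      apply Rmult_le_reg_r with d; auto. unfold Rdiv. rewrite Rmult_assoc, Rinv_l by auto. lra.
    - pose proof (F_mono m (p0 + d) p0 Hm ltac:(lra)). rewrite Hd1, Hd0 in H.
      replace (h / d) with ((-h) / (-d)) by (field; auto).
      apply Rmult_le_reg_r with (-d); [lra|]. unfold Rdiv. rewrite Rmult_assoc, Rinv_l by lra. lra. }
  replace ((am m (u + h) - am m u) / h) with (/ q).
  2:{ unfold q. fold p0. fold d. field. split; auto. }
  assert (E : / q - / L = (/ q * / L) * (L - q)) by (field; lra).
  rewrite E, Rabs_mult. rewrite Rabs_minus_sym.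
  assert (0 < / q) by (apply Rinv_0_lt_compat; lra).
  assert (0 < / L) by (apply Rinv_0_lt_compat; lra).
  assert (/ q <= 1) by (rewrite <- Rinv_1; apply Rinv_le_contravar; lra).
  assert (/ L <= 1) by (rewrite <- Rinv_1; apply Rinv_le_contravar; lra).
  assert (0 <= / q * / L) by (apply Rmult_le_pos; lra).
  assert (/ q * / L <= 1) by (rewrite <- (Rmult_1_r 1); apply Rmult_le_compat; lra).
  rewrite (Rabs_right (/ q * / L)) by lra.
  pose proof (Rabs_pos (q - L)). nra.
Qed.

Lemma sn_der m u : m ^ 2 < 1 -> is_derive (sn m) u (cn m u * dn m u).
Proof.
  intros Hm. pose proof (is_derive_comp sin (am m) u _ _ (is_derive_sin (am m u)) (am_der m u Hm)) as H.
  unfold scal in H; simpl in H; unfold mult in H; simpl in H.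
  replace (cn m u * dn m u) with (dn m u * cos (am m u)) by (unfold cn; ring). exact H.
Qed.

Lemma cn_der m u : m ^ 2 < 1 -> is_derive (cn m) u (- sn m u * dn m u).
Proof.
  intros Hm. pose proof (is_derive_comp cos (am m) u _ _ (is_derive_cos (am m u)) (am_der m u Hm)) as H.
  unfold scal in H; simpl in H; unfold mult in H; simpl in H.
  replace (- sn m u * dn m u) with (dn m u * - sin (am m u)) by (unfold sn; ring). exact H.
Qed.

Lemma dn_pos m u : m ^ 2 < 1 -> 0 < dn m u.
Proof. intros Hm. unfold dn, sn. apply sqrt_lt_R0. apply rad_pos; auto. Qed.

Lemma dn_sq m u : m ^ 2 < 1 -> dn m u ^ 2 = 1 - m ^ 2 * sn m u ^ 2.
Proof. intros Hm. unfold dn. rewrite pow2_sqrt; auto. unfold sn. left; apply rad_pos; auto. Qed.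

Lemma sc_sq m u : sn m u ^ 2 + cn m u ^ 2 = 1.
Proof. unfold sn, cn. rewrite <- (sin2_cos2 (am m u)). unfold Rsqr. ring. Qed.

Lemma dn_der m u : m ^ 2 < 1 -> is_derive (dn m) u (- m ^ 2 * sn m u * cn m u).
Proof.
  intros Hm.
  assert (Hg : is_derive (fun x => 1 - m ^ 2 * sn m x ^ 2) u (- m ^ 2 * (2 * sn m u * (cn m u * dn m u)))).
  { auto_derive.
    - eexists; apply sn_der; auto.
    - replace (Derive (fun x : R => sn m x) u) with (cn m u * dn m u)
        by (symmetry; apply is_derive_unique; apply sn_der; auto). ring. }
  pose proof (is_derive_sqrt _ _ _ Hg (rad_pos m (am m u) Hm)) as H.
  unfold dn. eapply is_derive_ext; [intros; reflexivity|].
  replace (- m ^ 2 * sn m u * cn m u) with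
    (- m ^ 2 * (2 * sn m u * (cn m u * dn m u)) / (2 * sqrt (1 - m ^ 2 * sn m u ^ 2))).
  exact H.
  fold (dn m u). pose proof (dn_pos m u Hm). field. lra.
Qed.

Lemma Dsn m y : m ^ 2 < 1 -> Derive (fun x0 => sn m x0) y = cn m y * dn m y.
Proof. intros; apply is_derive_unique, sn_der; auto. Qed.
Lemma Dcn m y : m ^ 2 < 1 -> Derive (fun x0 => cn m x0) y = - sn m y * dn m y.
Proof. intros; apply is_derive_unique, cn_der; auto. Qed.
Lemma Ddn m y : m ^ 2 < 1 -> Derive (fun x0 => dn m x0) y = - m ^ 2 * sn m y * cn m y.
Proof. intros; apply is_derive_unique, dn_der; auto. Qed.

Lemma Dpos m y z : m ^ 2 < 1 -> 0 < 1 - m ^ 2 * sn m y ^ 2 * sn m z ^ 2.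
Proof.
  intros Hm. pose proof (sc_sq m y). pose proof (sc_sq m z).
  assert (0 <= sn m y ^ 2 <= 1) by nra. assert (0 <= sn m z ^ 2 <= 1) by nra.
  assert (0 <= sn m y ^ 2 * sn m z ^ 2 <= 1) by nra. nra.
Qed.

Definition Dd m su sv := 1 - m ^ 2 * su ^ 2 * sv ^ 2.
Definition Dd' m su cu du sv cv dv := - m ^ 2 * (2 * su * cu * du * sv ^ 2 - 2 * su ^ 2 * sv * cv * dv).

Lemma algN m su cu du sv cv dv :
  cu ^ 2 = 1 - su ^ 2 -> cv ^ 2 = 1 - sv ^ 2 -> du ^ 2 = 1 - m ^ 2 * su ^ 2 -> dv ^ 2 = 1 - m ^ 2 * sv ^ 2 ->
  (cu * du * cv * dv + su * sv * dv * dv + su * cv * m ^ 2 * sv * cv - cv * dv * cu * du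
    - sv * su * du * du - sv * cu * m ^ 2 * su * cu) * Dd m su sv
  - (su * cv * dv + sv * cu * du) * Dd' m su cu du sv cv dv = 0.
Proof.
  intros Hc1 Hc2 Hd1 Hd2. unfold Dd, Dd'.
  match goal with |- ?E = 0 => replace E with
   ((1 - m ^ 2 * su ^ 2 * sv ^ 2) * (su * sv * (dv ^ 2 - du ^ 2) + m ^ 2 * su * sv * (cv ^ 2 - cu ^ 2))
    + 2 * m ^ 2 * su * sv * (sv ^ 2 * cu ^ 2 * du ^ 2 - su ^ 2 * cv ^ 2 * dv ^ 2)) by ring end.
  rewrite Hc1, Hc2, Hd1, Hd2. ring.
Qed.

Lemma algM m su cu du sv cv dv :
  cu ^ 2 = 1 - su ^ 2 -> cv ^ 2 = 1 - sv ^ 2 -> du ^ 2 = 1 - m ^ 2 * su ^ 2 -> dv ^ 2 = 1 - m ^ 2 * sv ^ 2 ->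
  (- su * du * cv + cu * sv * dv - cu * du * sv * du * dv + su * cv * dv * du * dv
    + m ^ 2 * su * su * cu * sv * dv - m ^ 2 * su * sv * du * sv * cv) * Dd m su sv
  - (cu * cv - su * sv * du * dv) * Dd' m su cu du sv cv dv = 0.
Proof.
  intros Hc1 Hc2 Hd1 Hd2. unfold Dd, Dd'.
  match goal with |- ?E = 0 => replace E with
   ((1 - m ^ 2 * su ^ 2 * sv ^ 2) * (cu * sv * dv * (1 - du ^ 2 + m ^ 2 * su ^ 2)
        + su * du * cv * (-1 + dv ^ 2 - m ^ 2 * sv ^ 2))
    + 2 * m ^ 2 * su * sv * (cu ^ 2 * cv * du * sv - cu * cv ^ 2 * su * dv
        - su * sv ^ 2 * cu * du ^ 2 * dv + su ^ 2 * sv * cv * du * dv ^ 2)) by ring end.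
  rewrite Hc1, Hc2, Hd1, Hd2. ring.
Qed.

Lemma Sq_der m s x : m ^ 2 < 1 ->
  is_derive (fun u => (sn m u * cn m (s - u) * dn m (s - u) + sn m (s - u) * cn m u * dn m u) /
     (1 - m ^ 2 * sn m u ^ 2 * sn m (s - u) ^ 2)) x 0.
Proof.
  intros Hm. pose proof (Dpos m x (s + - x) Hm) as HD. auto_derive.
  - repeat match goal with |- _ /\ _ => split end; try match goal with
      | |- ex_derive (fun _ => sn _ _) _ => eexists; apply sn_der; auto
      | |- ex_derive (fun _ => cn _ _) _ => eexists; apply cn_der; auto
      | |- ex_derive (fun _ => dn _ _) _ => eexists; apply dn_der; auto
      | |- True => exact I end.
    intro E. apply Rlt_not_eq in HD. apply HD. rewrite <- E. ring.
  - rewrite !Dsn, !Dcn, !Ddn by auto.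
    pose proof (sc_sq m x). pose proof (sc_sq m (s + - x)).
    pose proof (dn_sq m x Hm). pose proof (dn_sq m (s + - x) Hm).
    set (su := sn m x) in *. set (cu := cn m x) in *. set (du := dn m x) in *.
    set (sv := sn m (s + - x)) in *. set (cv := cn m (s + - x)) in *. set (dv := dn m (s + - x)) in *.
    match goal with |- ?E = 0 => replace E with
      (((cu * du * cv * dv + su * sv * dv * dv + su * cv * m ^ 2 * sv * cv - cv * dv * cu * du
    - sv * su * du * du - sv * cu * m ^ 2 * su * cu) * Dd m su sv
  - (su * cv * dv + sv * cu * du) * Dd' m su cu du sv cv dv) / (Dd m su sv * Dd m su sv)) end.
    + rewrite algN by lra. unfold Rdiv. ring.
    + unfold Dd, Dd'. field. intro E. apply Rlt_not_eq in HD. apply HD. rewrite <- E. ring.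
Qed.

Lemma Cq_der m s x : m ^ 2 < 1 ->
  is_derive (fun u => (cn m u * cn m (s - u) - sn m u * sn m (s - u) * dn m u * dn m (s - u)) /
     (1 - m ^ 2 * sn m u ^ 2 * sn m (s - u) ^ 2)) x 0.
Proof.
  intros Hm. pose proof (Dpos m x (s + - x) Hm) as HD. auto_derive.
  - repeat match goal with |- _ /\ _ => split end; try match goal with
      | |- ex_derive (fun _ => sn _ _) _ => eexists; apply sn_der; auto
      | |- ex_derive (fun _ => cn _ _) _ => eexists; apply cn_der; auto
      | |- ex_derive (fun _ => dn _ _) _ => eexists; apply dn_der; auto
      | |- True => exact I end.
    intro E. apply Rlt_not_eq in HD. apply HD. rewrite <- E. ring.
  - rewrite !Dsn, !Dcn, !Ddn by auto.
    pose proof (sc_sq m x). pose proof (sc_sq m (s + - x)).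
    pose proof (dn_sq m x Hm). pose proof (dn_sq m (s + - x) Hm).
    set (su := sn m x) in *. set (cu := cn m x) in *. set (du := dn m x) in *.
    set (sv := sn m (s + - x)) in *. set (cv := cn m (s + - x)) in *. set (dv := dn m (s + - x)) in *.
    match goal with |- ?E = 0 => replace E with
      (((- su * du * cv + cu * sv * dv - cu * du * sv * du * dv + su * cv * dv * du * dv
    + m ^ 2 * su * su * cu * sv * dv - m ^ 2 * su * sv * du * sv * cv) * Dd m su sv
  - (cu * cv - su * sv * du * dv) * Dd' m su cu du sv cv dv) / (Dd m su sv * Dd m su sv)) end.
    + rewrite algM by lra. unfold Rdiv. ring.
    + unfold Dd, Dd'. field. intro E. apply Rlt_not_eq in HD. apply HD. rewrite <- E. ring.
Qed.

Lemma const0 (g : R -> R) : (forall x, is_derive g x 0) -> forall a b, g a = g b.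
Proof.
  intros Hg a b.
  destruct (MVT_gen g a b (fun _ => 0)) as [c [_ Hc]].
  - intros; apply Hg.
  - intros x _. apply continuity_pt_filterlim. apply (ex_derive_continuous g x). eexists; apply Hg.
  - lra.
Qed.

Lemma am0 m : m ^ 2 < 1 -> am m 0 = 0.
Proof. intros Hm. rewrite <- (F_0 m) at 1. apply am_F; auto. Qed.
Lemma sn0 m : m ^ 2 < 1 -> sn m 0 = 0.
Proof. intros Hm. unfold sn. rewrite am0, sin_0; auto. Qed.
Lemma cn0 m : m ^ 2 < 1 -> cn m 0 = 1.
Proof. intros Hm. unfold cn. rewrite am0, cos_0; auto. Qed.
Lemma dn0 m : m ^ 2 < 1 -> dn m 0 = 1.
Proof. intros Hm. unfold dn. rewrite sn0 by auto. replace (1 - m ^ 2 * 0 ^ 2) with 1 by ring. apply sqrt_1. Qed.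

Lemma add_id m s u : m ^ 2 < 1 ->
  cn m (s - u) = cn m u * cn m s + sn m u * sn m s * dn m (s - u).
Proof.
  intros Hm.
  pose proof (const0 _ (fun x => Sq_der m s x Hm) u 0) as HS.
  pose proof (const0 _ (fun x => Cq_der m s x Hm) u 0) as HC.
  cbv beta in HS, HC.
  rewrite Rminus_0_r, sn0, cn0, dn0 in HS, HC by auto.
  replace ((0 * cn m s * dn m s + sn m s * 1 * 1) / (1 - m ^ 2 * 0 ^ 2 * sn m s ^ 2)) with (sn m s) in HS
    by (field; lra).
  replace ((1 * cn m s - 0 * sn m s * 1 * dn m s) / (1 - m ^ 2 * 0 ^ 2 * sn m s ^ 2)) with (cn m s) in HC
    by (field; lra).
  rewrite <- HS, <- HC.
  pose proof (Dpos m u (s - u) Hm) as HD.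
  pose proof (sc_sq m u). pose proof (dn_sq m (s - u) Hm).
  set (su := sn m u) in *. set (cu := cn m u) in *. set (du := dn m u) in *.
  set (sv := sn m (s - u)) in *. set (cv := cn m (s - u)) in *. set (dv := dn m (s - u)) in *.
  assert (K : cu * (cu * cv - su * sv * du * dv) + su * (su * cv * dv + sv * cu * du) * dv
     = cv * (1 - m ^ 2 * su ^ 2 * sv ^ 2)).
  { replace (cu * (cu * cv - su * sv * du * dv) + su * (su * cv * dv + sv * cu * du) * dv)
     with (cv * (cu ^ 2 + su ^ 2 * dv ^ 2)) by ring.
    rewrite H0. replace (cu ^ 2) with (1 - su ^ 2) by lra. ring. }
  apply Rmult_eq_reg_r with (1 - m ^ 2 * su ^ 2 * sv ^ 2); [|lra].
  rewrite <- K. field. lra.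
Qed.

Lemma fi_neg m x : fi m (- x) = fi m x.
Proof. unfold fi. rewrite sin_neg. replace ((- sin x) ^ 2) with (sin x ^ 2) by ring. reflexivity. Qed.

Lemma fi_shift m x : fi m (x + PI) = fi m x.
Proof. unfold fi. rewrite neg_sin. replace ((- sin x) ^ 2) with (sin x ^ 2) by ring. reflexivity. Qed.

Lemma DF m y : m ^ 2 < 1 -> Derive (fun x0 => ell_F m x0) y = fi m y.
Proof. intros; apply is_derive_unique, F_der; auto. Qed.

Lemma F_odd m x : m ^ 2 < 1 -> ell_F m (- x) = - ell_F m x.
Proof.
  intros Hm.
  assert (H : forall y, is_derive (fun y => ell_F m (- y) + ell_F m y) y 0).
  { intros y. auto_derive.
    - split; [eexists; apply F_der; auto | split; [eexists; apply F_der; auto | exact I]].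
    - rewrite !DF by auto. rewrite fi_neg. ring. }
  pose proof (const0 _ H x 0). cbv beta in H0. rewrite Ropp_0, F_0 in H0. lra.
Qed.

Lemma F_shift m x : m ^ 2 < 1 -> ell_F m (x + PI) = ell_F m x + ell_F m PI.
Proof.
  intros Hm.
  assert (H : forall y, is_derive (fun y => ell_F m (y + PI) - ell_F m y) y 0).
  { intros y. auto_derive.
    - split; [eexists; apply F_der; auto | split; [eexists; apply F_der; auto | exact I]].
    - rewrite !DF by auto. rewrite fi_shift. ring. }
  pose proof (const0 _ H x 0). cbv beta in H0. rewrite Rplus_0_l, F_0 in H0. lra.
Qed.

Lemma F_PI m : m ^ 2 < 1 -> ell_F m PI = 2 * ellK m.
Proof.
  intros Hm. unfold ellK. pose proof (F_shift m (- (PI / 2)) Hm).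
  replace (- (PI / 2) + PI) with (PI / 2) in H by field. rewrite F_odd in H by auto. lra.
Qed.

Lemma F_3PI2 m : m ^ 2 < 1 -> ell_F m (3 * (PI / 2)) = 3 * ellK m.
Proof.
  intros Hm. pose proof (F_shift m (PI / 2) Hm). rewrite F_PI in H by auto.
  replace (PI / 2 + PI) with (3 * (PI / 2)) in H by field. unfold ellK in *. lra.
Qed.

Lemma F_2PI m : m ^ 2 < 1 -> ell_F m (2 * PI) = 4 * ellK m.
Proof.
  intros Hm. pose proof (F_shift m PI Hm). rewrite F_PI in H by auto.
  replace (PI + PI) with (2 * PI) in H by field. lra.
Qed.

Lemma K_pos m : m ^ 2 < 1 -> PI / 2 <= ellK m.
Proof.
  intros Hm. unfold ellK. pose proof (F_mono m 0 (PI / 2) Hm). rewrite F_0 in H.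
  pose proof PI_RGT_0. lra.
Qed.

Lemma am_odd m u : m ^ 2 < 1 -> am m (- u) = - am m u.
Proof.
  intros Hm. rewrite <- (am_spec m u Hm) at 1. rewrite <- F_odd by auto. apply am_F; auto.
Qed.

Lemma sn_odd m u : m ^ 2 < 1 -> sn m (- u) = - sn m u.
Proof. intros Hm. unfold sn. rewrite am_odd, sin_neg; auto. Qed.
Lemma cn_even m u : m ^ 2 < 1 -> cn m (- u) = cn m u.
Proof. intros Hm. unfold cn. rewrite am_odd, cos_neg; auto. Qed.
Lemma dn_even m u : m ^ 2 < 1 -> dn m (- u) = dn m u.
Proof. intros Hm. unfold dn. rewrite sn_odd by auto. replace ((- sn m u) ^ 2) with (sn m u ^ 2) by ring. auto. Qed.

Lemma am_range m u lo hi : m ^ 2 < 1 -> ell_F m lo <= u < ell_F m hi -> lo <= am m u < hi.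
Proof.
  intros Hm [H1 H2]. rewrite <- (am_spec m u Hm) in H1, H2.
  split; [apply (F_le_iff m); auto | apply (F_lt_iff m); auto].
Qed.

Lemma IZR_small k : -2 < IZR k < 2 -> k = (-1)%Z \/ k = 0%Z \/ k = 1%Z.
Proof.
  intros [H1 H2]. apply lt_IZR in H1. apply lt_IZR in H2. lia.
Qed.

Lemma angle_unique t1 t2 : 0 <= t1 < 2 * PI -> 0 <= t2 < 2 * PI ->
  sin t1 = sin t2 -> cos t1 = cos t2 -> t1 = t2.
Proof.
  intros H1 H2 Hs Hc. pose proof PI_RGT_0.
  assert (Sd : sin (t1 - t2) = 0) by (rewrite sin_minus, Hs, Hc; ring).
  assert (Cd : cos (t1 - t2) = 1).
  { rewrite cos_minus, Hs, Hc. pose proof (sin2_cos2 t2). unfold Rsqr in H0. lra. }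
  destruct (sin_eq_0_0 _ Sd) as [k Hk].
  assert (-2 < IZR k < 2).
  { split.
    - apply Rmult_lt_reg_r with PI; auto. lra.
    - apply Rmult_lt_reg_r with PI; auto. lra. }
  destruct (IZR_small k H0) as [E|[E|E]]; rewrite E in Hk; simpl in Hk.
  - rewrite Hk in Cd. replace (-1 * PI) with (- PI) in Cd by ring. rewrite cos_neg, cos_PI in Cd. lra.
  - lra.
  - rewrite Hk in Cd. rewrite Rmult_1_l, cos_PI in Cd. lra.
Qed.

Lemma angle_exists X Y : X ^ 2 + Y ^ 2 = 1 ->
  exists t, 0 <= t < 2 * PI /\ sin t = X /\ cos t = Y.
Proof.
  intros H. pose proof PI_RGT_0.
  assert (HY : -1 <= Y <= 1) by nra.
  pose proof (acos_bound Y) as HB.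
  assert (Hs : sin (acos Y) = Rabs X).
  { rewrite sin_acos by auto. rewrite <- sqrt_Rsqr_abs. f_equal. unfold Rsqr. lra. }
  destruct (Rle_lt_dec 0 X).
  - exists (acos Y). split; [lra|]. split. rewrite Hs, Rabs_right; lra. apply cos_acos; auto.
  - exists (2 * PI - acos Y). 
    assert (0 < acos Y).
    { destruct (proj1 HB); auto. exfalso. rewrite <- H1, sin_0 in Hs.
      pose proof (Rabs_pos_lt X ltac:(lra)). lra. }
    split; [lra|]. split.
    + rewrite sin_minus, sin_2PI, cos_2PI, Hs, Rabs_left; lra.
    + rewrite cos_minus, sin_2PI, cos_2PI, cos_acos; auto; ring.
Qed.

Lemma sin_zero_range t : 0 <= t < 2 * PI -> sin t = 0 -> t = 0 \/ t = PI.
Proof.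
  intros Ht Hs. pose proof PI_RGT_0. destruct (sin_eq_0_0 _ Hs) as [k Hk].
  assert (-2 < IZR k < 2).
  { split; apply Rmult_lt_reg_r with PI; auto; lra. }
  destruct (IZR_small k H0) as [E|[E|E]]; rewrite E in Hk; simpl in Hk; lra.
Qed.

Lemma cos_zero_range t : 0 <= t < 2 * PI -> cos t = 0 -> t = PI / 2 \/ t = 3 * (PI / 2).
Proof.
  intros Ht Hs. pose proof PI_RGT_0. destruct (cos_eq_0_0 _ Hs) as [k Hk].
  assert (-2 < IZR k < 2).
  { split; apply Rmult_lt_reg_r with PI; auto; lra. }
  destruct (IZR_small k H0) as [E|[E|E]]; rewrite E in Hk; simpl in Hk; lra.
Qed.

Lemma inU_am m u : m ^ 2 < 1 -> 0 <= u < 4 * ellK m -> 0 <= am m u < 2 * PI.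
Proof. intros Hm H. apply am_range; auto. rewrite F_0, F_2PI; auto. Qed.

Lemma inV_am m v : m ^ 2 < 1 -> 0 <= v < ellK m -> 0 <= am m v < PI / 2.
Proof. intros Hm H. apply am_range; auto. rewrite F_0. unfold ellK in H. auto. Qed.

Lemma inV_cn m v : m ^ 2 < 1 -> 0 <= v < ellK m -> 0 < cn m v.
Proof. intros Hm H. apply inV_am in H; auto. unfold cn. apply cos_gt_0; lra. Qed.

Lemma inV_sn m v : m ^ 2 < 1 -> 0 <= v < ellK m -> 0 <= sn m v.
Proof. intros Hm H. apply inV_am in H; auto. unfold sn. pose proof PI_RGT_0. apply sin_ge_0; lra. Qed.

Lemma angle_to_u m t : m ^ 2 < 1 -> 0 <= t < 2 * PI ->
  0 <= ell_F m t < 4 * ellK m /\ sn m (ell_F m t) = sin t /\ cn m (ell_F m t) = cos t.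
Proof.
  intros Hm Ht. unfold sn, cn. rewrite am_F by auto. split; auto.
  rewrite <- F_0 with m, <- F_2PI by auto. split; [apply F_le | apply F_lt]; auto; lra.
Qed.

Lemma sc_to_u m X Y : m ^ 2 < 1 -> X ^ 2 + Y ^ 2 = 1 ->
  exists u, 0 <= u < 4 * ellK m /\ sn m u = X /\ cn m u = Y.
Proof.
  intros Hm H. destruct (angle_exists X Y H) as [t [Ht [Hs Hc]]].
  exists (ell_F m t). destruct (angle_to_u m t Hm Ht) as [A [B C]]. rewrite B, C; auto.
Qed.

Lemma u_unique m u1 u2 : m ^ 2 < 1 -> 0 <= u1 < 4 * ellK m -> 0 <= u2 < 4 * ellK m ->
  sn m u1 = sn m u2 -> cn m u1 = cn m u2 -> u1 = u2.
Proof.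
  intros Hm H1 H2 Hs Hc. rewrite <- (am_spec m u1 Hm), <- (am_spec m u2 Hm). f_equal.
  apply angle_unique; auto; apply inU_am; auto.
Qed.

Definition kv m b v := b ^ 2 * (sn m v / cn m v) ^ 2.


Lemma kv_a a b m v : m ^ 2 < 1 -> a ^ 2 * (1 - m ^ 2) = b ^ 2 -> 0 < cn m v ->
  a ^ 2 + kv m b v = a ^ 2 * dn m v ^ 2 / cn m v ^ 2.
Proof.
  intros Hm Hmab Hc. unfold kv. rewrite dn_sq by auto. rewrite <- Hmab.
  pose proof (sc_sq m v). field_simplify_eq; [|lra]. 
  replace (cn m v ^ 4) with (cn m v ^ 2 * cn m v ^ 2) by ring.
  replace (cn m v ^ 2) with (1 - sn m v ^ 2) by lra. ring.
Qed.

Lemma kv_b b m v : m ^ 2 < 1 -> 0 < cn m v ->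
  b ^ 2 + kv m b v = b ^ 2 / cn m v ^ 2.
Proof.
  intros Hm Hc. unfold kv. pose proof (sc_sq m v). field_simplify_eq; [|lra].
  replace (cn m v ^ 4) with (cn m v ^ 2 * cn m v ^ 2) by ring.
  replace (sn m v ^ 2) with (1 - cn m v ^ 2) by lra. ring.
Qed.

Lemma kv_nonneg m b v : 0 <= kv m b v.
Proof. unfold kv. apply Rmult_le_pos; apply pow2_ge_0. Qed.

Lemma Y_on_ellipse a b m u v : 0 < b -> b < a -> m ^ 2 < 1 -> a ^ 2 * (1 - m ^ 2) = b ^ 2 ->
  0 <= v < ellK m -> on_confocal a b (kv m b v) (Ymap a b m u v).
Proof.
  intros Hb Hab Hm Hmab Hv. pose proof (inV_cn m v Hm Hv). pose proof (dn_pos m v Hm).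
  unfold on_confocal, Ymap; cbn [fst snd]. rewrite kv_a, kv_b by auto.
  rewrite <- (sc_sq m u). field. repeat split; lra.
Qed.

Lemma ellipse_inv a b m v p : 0 < b -> b < a -> m ^ 2 < 1 -> a ^ 2 * (1 - m ^ 2) = b ^ 2 ->
  0 <= v < ellK m -> on_confocal a b (kv m b v) p ->
  exists u, 0 <= u < 4 * ellK m /\ Ymap a b m u v = p.
Proof.
  intros Hb Hab Hm Hmab Hv H. pose proof (inV_cn m v Hm Hv). pose proof (dn_pos m v Hm).
  destruct p as [x y]. unfold on_confocal in H; cbn [fst snd] in H. rewrite kv_a, kv_b in H by auto.
  destruct (sc_to_u m (- x * cn m v / (a * dn m v)) (y * cn m v / b) Hm) as [u [Hu [Hs Hc]]].
  { rewrite <- H. field. repeat split; lra. }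
  exists u. split; auto. unfold Ymap. rewrite Hs, Hc. f_equal; field; repeat split; lra.
Qed.

Lemma k_unique a b k1 k2 p : 0 < a -> 0 < b -> 0 <= k1 -> 0 <= k2 ->
  on_confocal a b k1 p -> on_confocal a b k2 p -> k1 = k2.
Proof.
  intros Ha Hb H1 H2 E1 E2. unfold on_confocal in *. destruct p as [x y]; cbn [fst snd] in *.
  assert (Ha1 : 0 < a ^ 2 + k1) by nra. assert (Ha2 : 0 < a ^ 2 + k2) by nra.
  assert (Hb1 : 0 < b ^ 2 + k1) by nra. assert (Hb2 : 0 < b ^ 2 + k2) by nra.
  assert (Dx : x ^ 2 / (a ^ 2 + k1) - x ^ 2 / (a ^ 2 + k2) = x ^ 2 * (k2 - k1) / ((a ^ 2 + k1) * (a ^ 2 + k2)))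
    by (field; lra).
  assert (Dy : y ^ 2 / (b ^ 2 + k1) - y ^ 2 / (b ^ 2 + k2) = y ^ 2 * (k2 - k1) / ((b ^ 2 + k1) * (b ^ 2 + k2)))
    by (field; lra).
  assert (S : x ^ 2 * (k2 - k1) / ((a ^ 2 + k1) * (a ^ 2 + k2)) + y ^ 2 * (k2 - k1) / ((b ^ 2 + k1) * (b ^ 2 + k2)) = 0)
    by lra.
  destruct (Rtotal_order k1 k2) as [L|[L|L]]; auto; exfalso.
  - assert (A1 : 0 <= x ^ 2 * (k2 - k1) / ((a ^ 2 + k1) * (a ^ 2 + k2))).
    { apply Rmult_le_pos. apply Rmult_le_pos; [apply pow2_ge_0|lra]. left; apply Rinv_0_lt_compat; nra. }
    assert (A2 : 0 <= y ^ 2 * (k2 - k1) / ((b ^ 2 + k1) * (b ^ 2 + k2))).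
    { apply Rmult_le_pos. apply Rmult_le_pos; [apply pow2_ge_0|lra]. left; apply Rinv_0_lt_compat; nra. }
    assert (Z1 : x ^ 2 * (k2 - k1) / ((a ^ 2 + k1) * (a ^ 2 + k2)) = 0) by lra.
    assert (Z2 : y ^ 2 * (k2 - k1) / ((b ^ 2 + k1) * (b ^ 2 + k2)) = 0) by lra.
    assert (x ^ 2 = 0).
    { apply Rmult_eq_reg_r with ((k2 - k1) / ((a ^ 2 + k1) * (a ^ 2 + k2))).
      rewrite Rmult_0_l. rewrite <- Z1. field; lra.
      apply Rgt_not_eq. apply Rdiv_lt_0_compat; nra. }
    assert (y ^ 2 = 0).
    { apply Rmult_eq_reg_r with ((k2 - k1) / ((b ^ 2 + k1) * (b ^ 2 + k2))).
      rewrite Rmult_0_l. rewrite <- Z2. field; lra.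
      apply Rgt_not_eq. apply Rdiv_lt_0_compat; nra. }
    rewrite H, H0 in E1. unfold Rdiv in E1. lra.
  - assert (A1 : x ^ 2 * (k2 - k1) / ((a ^ 2 + k1) * (a ^ 2 + k2)) <= 0).
    { unfold Rdiv. apply Rmult_le_0_r. apply Rmult_le_0_l; [apply pow2_ge_0|lra]. left; apply Rinv_0_lt_compat; nra. }
    assert (A2 : y ^ 2 * (k2 - k1) / ((b ^ 2 + k1) * (b ^ 2 + k2)) <= 0).
    { unfold Rdiv. apply Rmult_le_0_r. apply Rmult_le_0_l; [apply pow2_ge_0|lra]. left; apply Rinv_0_lt_compat; nra. }
    assert (Z1 : x ^ 2 * (k2 - k1) / ((a ^ 2 + k1) * (a ^ 2 + k2)) = 0) by lra.
    assert (Z2 : y ^ 2 * (k2 - k1) / ((b ^ 2 + k1) * (b ^ 2 + k2)) = 0) by lra.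
    assert (x ^ 2 = 0).
    { apply Rmult_eq_reg_r with ((k2 - k1) / ((a ^ 2 + k1) * (a ^ 2 + k2))).
      rewrite Rmult_0_l. rewrite <- Z1. field; lra.
      apply Rlt_not_eq. apply Ropp_lt_cancel. rewrite Ropp_0. 
      replace (- ((k2 - k1) / ((a ^ 2 + k1) * (a ^ 2 + k2)))) with ((k1 - k2) / ((a ^ 2 + k1) * (a ^ 2 + k2))) by (field; lra).
      apply Rdiv_lt_0_compat; nra. }
    assert (y ^ 2 = 0).
    { apply Rmult_eq_reg_r with ((k2 - k1) / ((b ^ 2 + k1) * (b ^ 2 + k2))).
      rewrite Rmult_0_l. rewrite <- Z2. field; lra.
      apply Rlt_not_eq. apply Ropp_lt_cancel. rewrite Ropp_0. 
      replace (- ((k2 - k1) / ((b ^ 2 + k1) * (b ^ 2 + k2)))) with ((k1 - k2) / ((b ^ 2 + k1) * (b ^ 2 + k2))) by (field; lra).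
      apply Rdiv_lt_0_compat; nra. }
    rewrite H, H0 in E1. unfold Rdiv in E1. lra.
Qed.

Lemma Y_inj a b m u1 v1 u2 v2 : 0 < b -> b < a -> m ^ 2 < 1 -> a ^ 2 * (1 - m ^ 2) = b ^ 2 ->
  0 <= u1 < 4 * ellK m -> 0 <= v1 < ellK m -> 0 <= u2 < 4 * ellK m -> 0 <= v2 < ellK m ->
  Ymap a b m u1 v1 = Ymap a b m u2 v2 -> u1 = u2 /\ v1 = v2.
Proof.
  intros Hb Hab Hm Hmab Hu1 Hv1 Hu2 Hv2 E.
  pose proof (Y_on_ellipse a b m u1 v1 Hb Hab Hm Hmab Hv1) as E1.
  pose proof (Y_on_ellipse a b m u2 v2 Hb Hab Hm Hmab Hv2) as E2.
  rewrite <- E in E2.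
  pose proof (k_unique a b _ _ _ ltac:(lra) Hb (kv_nonneg m b v1) (kv_nonneg m b v2) E1 E2) as K.
  pose proof (inV_cn m v1 Hm Hv1). pose proof (inV_cn m v2 Hm Hv2).
  pose proof (inV_sn m v1 Hm Hv1). pose proof (inV_sn m v2 Hm Hv2).
  assert (T : sn m v1 / cn m v1 = sn m v2 / cn m v2).
  { unfold kv in K. apply Rsqr_inj.
    - apply Rmult_le_pos; [lra| left; apply Rinv_0_lt_compat; lra].
    - apply Rmult_le_pos; [lra| left; apply Rinv_0_lt_compat; lra].
    - unfold Rsqr. apply Rmult_eq_reg_l with (b ^ 2); [|nra]. nra. }
  assert (Ev : v1 = v2).
  { rewrite <- (am_spec m v1 Hm), <- (am_spec m v2 Hm). f_equal.
    pose proof (inV_am m v1 Hm Hv1). pose proof (inV_am m v2 Hm Hv2).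
    unfold sn, cn in T. fold (tan (am m v1)) in T. fold (tan (am m v2)) in T.
    rewrite <- (atan_tan (am m v1)), <- (atan_tan (am m v2)), T; auto; lra. }
  subst v2. split; auto.
  pose proof (dn_pos m v1 Hm).
  unfold Ymap in E. injection E as Ex Ey.
  apply (u_unique m); auto.
  - apply Rmult_eq_reg_l with (- a * dn m v1 / cn m v1).
    + replace (- a * dn m v1 / cn m v1 * sn m u1) with (- a * (sn m u1 * dn m v1 / cn m v1)) by (field; lra).
      rewrite Ex. field. lra.
    + apply Rlt_not_eq. apply Ropp_lt_cancel. rewrite Ropp_0.
      replace (- (- a * dn m v1 / cn m v1)) with (a * dn m v1 / cn m v1) by (field; lra).
      apply Rdiv_lt_0_compat; nra.
  - apply Rmult_eq_reg_l with (b / cn m v1).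
    + replace (b / cn m v1 * cn m u1) with (b * (cn m u1 / cn m v1)) by (field; lra).
      rewrite Ey. field. lra.
    + apply Rgt_not_eq. apply Rdiv_lt_0_compat; lra.
Qed.

Lemma ext_fwd a b m u v : 0 < b -> b < a -> m ^ 2 < 1 -> 
  0 <= v < ellK m ->
  fst (Ymap a b m u v) ^ 2 / a ^ 2 + snd (Ymap a b m u v) ^ 2 / b ^ 2 >= 1.
Proof.
  intros Hb Hab Hm Hv. pose proof (inV_cn m v Hm Hv). pose proof (dn_pos m v Hm).
  unfold Ymap; cbn [fst snd].
  pose proof (dn_sq m v Hm). pose proof (sc_sq m u). pose proof (sc_sq m v).
  replace ((- a * (sn m u * dn m v / cn m v)) ^ 2 / a ^ 2 + (b * (cn m u / cn m v)) ^ 2 / b ^ 2)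
    with (1 + (sn m u ^ 2 * dn m v ^ 2 + cn m u ^ 2 - cn m v ^ 2) / cn m v ^ 2) by (field; repeat split; lra).
  assert (0 <= (sn m u ^ 2 * dn m v ^ 2 + cn m u ^ 2 - cn m v ^ 2) / cn m v ^ 2).
  { apply Rmult_le_pos; [|left; apply Rinv_0_lt_compat; nra].
    rewrite H1. replace (cn m u ^ 2) with (1 - sn m u ^ 2) by lra.
    replace (cn m v ^ 2) with (1 - sn m v ^ 2) by lra.
    assert (0 <= sn m u ^ 2) by apply pow2_ge_0. assert (0 <= sn m v ^ 2) by apply pow2_ge_0.
    assert (0 <= 1 - m ^ 2) by lra. pose proof (pow2_ge_0 (cn m u)). assert (0 <= 1 - sn m u ^ 2) by lra.
    replace (sn m u ^ 2 * (1 - m ^ 2 * sn m v ^ 2) + (1 - sn m u ^ 2) - (1 - sn m v ^ 2))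
      with (sn m v ^ 2 * (1 - sn m u ^ 2) + sn m u ^ 2 * sn m v ^ 2 * (1 - m ^ 2)) by ring.
    apply Rplus_le_le_0_compat; apply Rmult_le_pos; auto. apply Rmult_le_pos; auto. }
  lra.
Qed.

Lemma ext_bwd a b m p : 0 < b -> b < a -> m ^ 2 < 1 -> a ^ 2 * (1 - m ^ 2) = b ^ 2 ->
  fst p ^ 2 / a ^ 2 + snd p ^ 2 / b ^ 2 >= 1 ->
  exists v, 0 <= v < ellK m /\ on_confocal a b (kv m b v) p.
Proof.
  intros Hb Hab Hm Hmab H. destruct p as [x y]. cbn [fst snd] in *. unfold on_confocal; cbn [fst snd].
  set (Bq := a ^ 2 + b ^ 2 - x ^ 2 - y ^ 2).
  set (Cq := a ^ 2 * b ^ 2 - x ^ 2 * b ^ 2 - y ^ 2 * a ^ 2).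
  assert (HC : Cq <= 0).
  { unfold Cq. assert (x ^ 2 / a ^ 2 + y ^ 2 / b ^ 2 - 1 >= 0) by lra.
    replace (a ^ 2 * b ^ 2 - x ^ 2 * b ^ 2 - y ^ 2 * a ^ 2) with
      (- (a ^ 2 * b ^ 2) * (x ^ 2 / a ^ 2 + y ^ 2 / b ^ 2 - 1)) by (field; lra).
    assert (0 < a ^ 2 * b ^ 2) by (apply Rmult_lt_0_compat; nra). nra. }
  assert (Hdisc : 0 <= Bq ^ 2 - 4 * Cq) by nra.
  set (k := (- Bq + sqrt (Bq ^ 2 - 4 * Cq)) / 2).
  assert (Hsq : sqrt (Bq ^ 2 - 4 * Cq) ^ 2 = Bq ^ 2 - 4 * Cq) by (apply pow2_sqrt; auto).
  assert (Hsp : 0 <= sqrt (Bq ^ 2 - 4 * Cq)) by apply sqrt_pos.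
  assert (Hk0 : 0 <= k).
  { unfold k. assert (Bq <= sqrt (Bq ^ 2 - 4 * Cq)) by nra. lra. }
  assert (Hkq : k ^ 2 + Bq * k + Cq = 0).
  { unfold k. replace (((- Bq + sqrt (Bq ^ 2 - 4 * Cq)) / 2) ^ 2 + Bq * ((- Bq + sqrt (Bq ^ 2 - 4 * Cq)) / 2) + Cq)
      with ((sqrt (Bq ^ 2 - 4 * Cq) ^ 2 - Bq ^ 2) / 4 + Cq) by field. rewrite Hsq. field. }
  set (t := atan (sqrt k / b)).
  assert (Ht : 0 <= t < PI / 2).
  { unfold t. pose proof (atan_bound (sqrt k / b)). split; [|lra].
    assert (0 <= sqrt k / b) by (apply Rmult_le_pos; [apply sqrt_pos| left; apply Rinv_0_lt_compat; lra]).
    destruct H1. apply Rlt_le. rewrite <- atan_0. apply atan_increasing; auto.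
    rewrite <- H1, atan_0. lra. }
  exists (ell_F m t). split.
  { split. rewrite <- (F_0 m). apply F_le; auto; lra. unfold ellK. apply F_lt; auto; lra. }
  assert (Kv : kv m b (ell_F m t) = k).
  { unfold kv, sn, cn. rewrite am_F by auto. fold (tan t). unfold t. rewrite tan_atan.
    replace (b ^ 2 * (sqrt k / b) ^ 2) with (sqrt k ^ 2) by (field; lra). apply pow2_sqrt; auto. }
  rewrite Kv.
  assert (0 < a ^ 2 + k) by nra. assert (0 < b ^ 2 + k) by nra.
  apply Rmult_eq_reg_r with ((a ^ 2 + k) * (b ^ 2 + k)); [|nra].
  field_simplify; try lra. unfold Bq, Cq in Hkq. nra.
Qed.

Lemma hyper a b m u : 0 < b -> b < a -> m ^ 2 < 1 -> a ^ 2 * (1 - m ^ 2) = b ^ 2 ->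
  0 <= u < 4 * ellK m -> u <> 0 -> u <> ellK m -> u <> 2 * ellK m -> u <> 3 * ellK m ->
  exists k, - a ^ 2 < k < - b ^ 2 /\
  exists sg, (sg = 1 \/ sg = -1) /\
    forall v, 0 <= v < ellK m -> on_confocal a b k (Ymap a b m u v) /\ 0 < sg * fst (Ymap a b m u v).
Proof.
  intros Hb Hab Hm Hmab Hu H0 H1 H2 H3.
  pose proof (inU_am m u Hm Hu) as Ht.
  assert (Hs : sn m u <> 0).
  { intro E. unfold sn in E. destruct (sin_zero_range _ Ht E) as [A|A].
    - apply H0. rewrite <- (am_spec m u Hm), A. apply F_0.
    - apply H2. rewrite <- (am_spec m u Hm), A. apply F_PI; auto. }
  assert (Hc : cn m u <> 0).
  { intro E. unfold cn in E. destruct (cos_zero_range _ Ht E) as [A|A].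
    - apply H1. rewrite <- (am_spec m u Hm), A. reflexivity.
    - apply H3. rewrite <- (am_spec m u Hm), A. apply F_3PI2; auto. }
  pose proof (sc_sq m u) as Hsc.
  assert (0 < sn m u ^ 2) by (apply pow2_gt_0; auto).
  assert (0 < cn m u ^ 2) by (apply pow2_gt_0; auto).
  assert (Hc2 : 0 < a ^ 2 - b ^ 2) by nra.
  exists ((a ^ 2 - b ^ 2) * sn m u ^ 2 - a ^ 2). split.
  { split; nra. }
  exists (if Rlt_dec 0 (sn m u) then -1 else 1). split.
  { destruct (Rlt_dec 0 (sn m u)); auto. }
  intros v Hv. pose proof (inV_cn m v Hm Hv). pose proof (dn_pos m v Hm).
  pose proof (dn_sq m v Hm) as Hd2. pose proof (sc_sq m v) as Hsv.
  split.
  - unfold on_confocal, Ymap; cbn [fst snd].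
    replace (a ^ 2 + ((a ^ 2 - b ^ 2) * sn m u ^ 2 - a ^ 2)) with ((a ^ 2 - b ^ 2) * sn m u ^ 2) by ring.
    replace (b ^ 2 + ((a ^ 2 - b ^ 2) * sn m u ^ 2 - a ^ 2)) with (- ((a ^ 2 - b ^ 2) * cn m u ^ 2)) by nra.
    replace ((- a * (sn m u * dn m v / cn m v)) ^ 2 / ((a ^ 2 - b ^ 2) * sn m u ^ 2) +
      (b * (cn m u / cn m v)) ^ 2 / - ((a ^ 2 - b ^ 2) * cn m u ^ 2))
     with ((a ^ 2 * dn m v ^ 2 - b ^ 2) / ((a ^ 2 - b ^ 2) * cn m v ^ 2)) by (field; repeat split; lra).
    assert (N : a ^ 2 * dn m v ^ 2 - b ^ 2 = (a ^ 2 - b ^ 2) * cn m v ^ 2).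
    { rewrite Hd2, <- Hmab. replace (cn m v ^ 2) with (1 - sn m v ^ 2) by lra. ring. }
    rewrite N. field. split; nra.
  - unfold Ymap; cbn [fst snd]. destruct (Rlt_dec 0 (sn m u)).
    + replace (-1 * (- a * (sn m u * dn m v / cn m v))) with (a * sn m u * dn m v / cn m v) by (field; lra).
      apply Rdiv_lt_0_compat; auto. apply Rmult_lt_0_compat; auto. apply Rmult_lt_0_compat; lra.
    + assert (sn m u < 0) by lra.
      replace (1 * (- a * (sn m u * dn m v / cn m v))) with (a * (- sn m u) * dn m v / cn m v) by (field; lra).
      apply Rdiv_lt_0_compat; auto. apply Rmult_lt_0_compat; auto. apply Rmult_lt_0_compat; lra.
Qed.

Lemma tangent_gen a b m s u v : 0 < b -> b < a -> m ^ 2 < 1 ->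
  0 <= v < ellK m -> cn m v = cn m (s - u) -> dn m v = dn m (s - u) ->
  on_tangent a b (- a * sn m s) (b * cn m s) (Ymap a b m u v).
Proof.
  intros Hb Hab Hm Hv Ec Ed. pose proof (inV_cn m v Hm Hv).
  unfold on_tangent, Ymap; cbn [fst snd].
  replace (- a * (sn m u * dn m v / cn m v) * (- a * sn m s) / a ^ 2 + b * (cn m u / cn m v) * (b * cn m s) / b ^ 2)
    with ((cn m u * cn m s + sn m u * sn m s * dn m v) / cn m v) by (field; repeat split; lra).
  rewrite Ed. rewrite <- add_id by auto. rewrite <- Ec. field. lra.
Qed.

Lemma tangent_pt a b m s : 0 < b -> b < a -> m ^ 2 < 1 ->
  (- a * sn m s) ^ 2 / a ^ 2 + (b * cn m s) ^ 2 / b ^ 2 = 1.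
Proof.
  intros. rewrite <- (sc_sq m s). field. split; lra.
Qed.

Lemma m_facts a b : 0 < b -> b < a ->
  let m := sqrt (a ^ 2 - b ^ 2) / a in m ^ 2 < 1 /\ a ^ 2 * (1 - m ^ 2) = b ^ 2.
Proof.
  intros Hb Hab m.
  assert (E : m ^ 2 = (a ^ 2 - b ^ 2) / a ^ 2).
  { unfold m. replace ((sqrt (a ^ 2 - b ^ 2) / a) ^ 2) with (sqrt (a ^ 2 - b ^ 2) ^ 2 / a ^ 2) by (field; lra).
    rewrite pow2_sqrt; auto. nra. }
  rewrite E. split.
  - apply Rmult_lt_reg_r with (a ^ 2). nra. unfold Rdiv. rewrite Rmult_assoc, Rinv_l by nra. nra.
  - field. lra.
Qed.

Theorem theorem3 (a b : R) (hb : 0 < b) (hab : b < a) :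
  let m := sqrt (a ^ 2 - b ^ 2) / a in
  let Y := Ymap a b m in
  let inU := fun u => 0 <= u < 4 * ellK m in
  let inV := fun v => 0 <= v < ellK m in
  (* injectivity on U x V *)
  (forall u1 v1 u2 v2, inU u1 -> inV v1 -> inU u2 -> inV v2 ->
     Y u1 v1 = Y u2 v2 -> u1 = u2 /\ v1 = v2) /\
  (* the image is the (closed) exterior of c *)
  (forall p : R * R,
     (exists u v, inU u /\ inV v /\ Y u v = p) <->
     fst p ^ 2 / a ^ 2 + snd p ^ 2 / b ^ 2 >= 1) /\
  (* u~ = const (non-degenerate values): inside one branch of a confocal hyperbola *)
  (forall u, inU u -> u <> 0 -> u <> ellK m -> u <> 2 * ellK m -> u <> 3 * ellK m ->
     exists k, - a ^ 2 < k < - b ^ 2 /\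
     exists sg, (sg = 1 \/ sg = -1) /\
       forall v, inV v -> on_confocal a b k (Y u v) /\ 0 < sg * fst (Y u v)) /\
  (* v~ = const: a (whole) ellipse confocal with c *)
  (forall v, inV v ->
     exists k, - b ^ 2 < k /\
       forall p : R * R, (exists u, inU u /\ Y u v = p) <-> on_confocal a b k p) /\
  (* u~ + v~ = const: contained in a tangent line of c *)
  (forall s, exists x0 y0, x0 ^ 2 / a ^ 2 + y0 ^ 2 / b ^ 2 = 1 /\
     forall u v, inU u -> inV v -> u + v = s -> on_tangent a b x0 y0 (Y u v)) /\
  (* u~ - v~ = const: contained in a tangent line of c *)
  (forall s, exists x0 y0, x0 ^ 2 / a ^ 2 + y0 ^ 2 / b ^ 2 = 1 /\
     forall u v, inU u -> inV v -> u - v = s -> on_tangent a b x0 y0 (Y u v)).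
Proof.
  intros m Y inU inV.
  destruct (m_facts a b hb hab) as [Hm Hmab]. fold m in Hm, Hmab.
  split; [|split; [|split; [|split; [|split]]]].
  - intros u1 v1 u2 v2 H1 H2 H3 H4 E. eapply Y_inj; eauto.
  - intros p. split.
    + intros [u [v [Hu [Hv E]]]]. rewrite <- E. apply ext_fwd; auto.
    + intros H. destruct (ext_bwd a b m p hb hab Hm Hmab H) as [v [Hv Hc]].
      destruct (ellipse_inv a b m v p hb hab Hm Hmab Hv Hc) as [u [Hu E]].
      exists u, v. auto.
  - intros u Hu H0 H1 H2 H3. apply hyper; auto.
  - intros v Hv. exists (kv m b v). split.
    + pose proof (kv_nonneg m b v). nra.
    + intros p. split.
      * intros [u [Hu E]]. rewrite <- E. apply Y_on_ellipse; auto.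
      * intros H. apply ellipse_inv; auto.
  - intros s. exists (- a * sn m s), (b * cn m s). split. apply tangent_pt; auto.
    intros u v Hu Hv E. apply tangent_gen; auto; replace v with (s - u) by lra; reflexivity.
  - intros s. exists (- a * sn m s), (b * cn m s). split. apply tangent_pt; auto.
    intros u v Hu Hv E. replace v with (- (s - u)) by lra.
    apply tangent_gen; auto.
    + replace (- (s - u)) with v by lra. auto.
    + apply cn_even; auto.
    + apply dn_even; auto.
Qed.
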